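(* Let $n \geq 2$, let $A \in \mathbb{R}^{n\times n}$ be symmetric, $b \in \mathbb{R}^n$, $c \in \mathbb{R}$, and let $C = \begin{pmatrix} A & b \\ b^\top & c \end{pmatrix}$. For $p \geq 2$, consider the problem \[ \min_{Y_1 \in \mathbb{R}^{n\times p},\, y_2 \in \mathbb{R}^p} \langle CY, Y\rangle \quad \text{subject to} \quad \|Y_1\|^2 = 1,\ \|y_2\|^2 = 1, \qquad \text{with } Y = \begin{pmatrix} Y_1 \\ y_2^\top \end{pmatrix} \in \mathbb{R}^{(n+1)\times p}. \] Then every second-order critical point of this problem is globally optimal (for all $A, b, c$).
   Context: This problem is the Burer--Monteiro factorization at rank $p$ of the SDP relaxation of the trust-region subproblem $\min_{x\in\mathbb{R}^n} x^\top A x + 2b^\top x + c$ s.t. $\|x\|^2 = 1$, namely $\min_{X} \langle C, X\rangle$ s.t. $\mathrm{trace}(X_{1:n,1:n}) = 1$, $X_{n+1,n+1} = 1$, $X \succeq 0$ (symmetric $X$ of size $n+1$), where $X = YY^\top$. Here $\langle U, V\rangle = \mathrm{trace}(U^\top V)$ and $\|\cdot\|$ is the Frobenius norm (2-norm for vectors). The feasible set $\mathcal{M} = \{Y : \|Y_1\|^2 = 1, \|y_2\|^2 = 1\}$ is a smooth submanifold of $\mathbb{R}^{(n+1)\times p}$, and with cost $g(Y) = \langle CY, Y\rangle$, a point $Y \in \mathcal{M}$ is second-order critical if its Riemannian gradient vanishes and its Riemannian Hessian is positive semidefinite on the tangent space. Globally optimal points $Y$ map to globally optimal $X = YY^\top$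 of the SDP. *)

(* Defs.v *)
From HB Require Import structures.
From mathcomp Require Import all_boot all_order all_algebra.
From mathcomp Require Import reals.
Set Implicit Arguments. Unset Strict Implicit. Unset Printing Implicit Defensive.
Import Order.TTheory GRing.Theory Num.Theory.
Local Open Scope ring_scope.

Section TRS.
Variables (R : realType) (n p : nat).

Definition frob {m k : nat} (U V : 'M[R]_(m, k)) : R := \tr (U^T *m V).

Definition Cmat (A : 'M[R]_n) (b : 'cV[R]_n) (c : R) : 'M[R]_(n + 1) :=
  block_mx A b b^T c%:M.

Definition Yblk1 (Y : 'M[R]_(n + 1, p)) : 'M[R]_(n, p) := usubmx Y.
Definition Yblk2 (Y : 'M[R]_(n + 1, p)) : 'M[R]_(1, p) := dsubmx Y.

Definition onM (Y : 'M[R]_(n + 1, p)) : Prop :=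
  frob (Yblk1 Y) (Yblk1 Y) = 1 /\ frob (Yblk2 Y) (Yblk2 Y) = 1.

Definition cost (C : 'M[R]_(n + 1)) (Y : 'M[R]_(n + 1, p)) : R := frob (C *m Y) Y.

(* Euclidean gradient and Hessian of g (C symmetric): 2 C Y and V |-> 2 C V. *)
Definition egrad (C : 'M[R]_(n + 1)) (Y : 'M[R]_(n + 1, p)) : 'M[R]_(n + 1, p) :=
  2%:R *: (C *m Y).
Definition ehess (C : 'M[R]_(n + 1)) (V : 'M[R]_(n + 1, p)) : 'M[R]_(n + 1, p) :=
  2%:R *: (C *m V).

Definition tangent (Y V : 'M[R]_(n + 1, p)) : Prop :=
  frob (Yblk1 Y) (Yblk1 V) = 0 /\ frob (Yblk2 Y) (Yblk2 V) = 0.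

Definition projT (Y Z : 'M[R]_(n + 1, p)) : 'M[R]_(n + 1, p) :=
  col_mx (Yblk1 Z - frob (Yblk1 Y) (Yblk1 Z) *: Yblk1 Y)
         (Yblk2 Z - frob (Yblk2 Y) (Yblk2 Z) *: Yblk2 Y).

Definition rgrad (C : 'M[R]_(n + 1)) (Y : 'M[R]_(n + 1, p)) : 'M[R]_(n + 1, p) :=
  projT Y (egrad C Y).

(* This equals Proj_Y (D rgrad(Y)[V]), the standard formula for submanifolds. *)
Definition rhess (C : 'M[R]_(n + 1)) (Y V : 'M[R]_(n + 1, p)) : 'M[R]_(n + 1, p) :=
  projT Y (ehess C V)
  - col_mx (frob (Yblk1 Y) (Yblk1 (egrad C Y)) *: Yblk1 V)
           (frob (Yblk2 Y) (Yblk2 (egrad C Y)) *: Yblk2 V).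

Definition second_order_critical (C : 'M[R]_(n + 1)) (Y : 'M[R]_(n + 1, p)) : Prop :=
  onM Y /\ rgrad C Y = 0 /\
  (forall V : 'M[R]_(n + 1, p), tangent Y V -> 0 <= frob V (rhess C Y V)).

Definition globally_optimal (C : 'M[R]_(n + 1)) (Y : 'M[R]_(n + 1, p)) : Prop :=
  onM Y /\ (forall Z : 'M[R]_(n + 1, p), onM Z -> cost C Y <= cost C Z).

End TRS.

(* Main.v *)
Require Import Defs.
From HB Require Import structures.
From mathcomp Require Import all_boot all_order all_algebra.
From mathcomp Require Import reals.
From mathcomp Require Import ring.
Import Order.TTheory GRing.Theory Num.Theory.
Local Open Scope ring_scope.

Section Helpers.
Variable R : realType.

Lemma frobC m k (U V : 'M[R]_(m, k)) : frob U V = frob V U.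
Proof. by rewrite /frob -mxtrace_tr trmx_mul trmxK. Qed.

Lemma frobDr m k (U V W : 'M[R]_(m, k)) : frob U (V + W) = frob U V + frob U W.
Proof. by rewrite /frob mulmxDr mxtraceD. Qed.

Lemma frobZr m k (U V : 'M[R]_(m, k)) a : frob U (a *: V) = a * frob U V.
Proof. by rewrite /frob -scalemxAr mxtraceZ. Qed.

Lemma frobNr m k (U V : 'M[R]_(m, k)) : frob U (- V) = - frob U V.
Proof. by rewrite -scaleN1r frobZr mulN1r. Qed.

Lemma frobBr m k (U V W : 'M[R]_(m, k)) : frob U (V - W) = frob U V - frob U W.
Proof. by rewrite frobDr frobNr. Qed.

Lemma frobDl m k (U V W : 'M[R]_(m, k)) : frob (V + W) U = frob V U + frob W U.
Proof. by rewrite frobC frobDr !(frobC _ _ _ U). Qed.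

Lemma frobZl m k (U V : 'M[R]_(m, k)) a : frob (a *: V) U = a * frob V U.
Proof. by rewrite frobC frobZr frobC. Qed.

Lemma frob0r m k (U : 'M[R]_(m, k)) : frob U 0 = 0.
Proof. by rewrite /frob mulmx0 linear0. Qed.

Lemma frob0l m k (U : 'M[R]_(m, k)) : frob 0 U = 0.
Proof. by rewrite frobC frob0r. Qed.

Lemma frob_col m1 m2 k (U1 V1 : 'M[R]_(m1, k)) (U2 V2 : 'M[R]_(m2, k)) :
  frob (col_mx U1 U2) (col_mx V1 V2) = frob U1 V1 + frob U2 V2.
Proof. by rewrite /frob tr_col_mx mul_row_col mxtraceD. Qed.

Lemma frob_split m1 m2 k (U V : 'M[R]_(m1 + m2, k)) :
  frob U V = frob (usubmx U) (usubmx V) + frob (dsubmx U) (dsubmx V).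
Proof. by rewrite -frob_col !vsubmxK. Qed.

Lemma frob_sumsq m k (U : 'M[R]_(m, k)) :
  frob U U = \sum_j \sum_i U i j ^+ 2.
Proof.
rewrite /frob /mxtrace; apply: eq_bigr => j _; rewrite mxE.
by apply: eq_bigr => i _; rewrite mxE expr2.
Qed.

Lemma frob_ge0 m k (U : 'M[R]_(m, k)) : 0 <= frob U U.
Proof.
by rewrite frob_sumsq; apply: sumr_ge0 => j _; apply: sumr_ge0 => i _; apply: sqr_ge0.
Qed.

Lemma frob_eq0 m k (U : 'M[R]_(m, k)) : frob U U = 0 -> U = 0.
Proof.
rewrite frob_sumsq => H; apply/matrixP => i j; rewrite mxE.
have H1 := psumr_eq0P (fun j _ => sumr_ge0 _ (fun i _ => sqr_ge0 (U i j))) H.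
have H2 := H1 j isT.
have H3 := psumr_eq0P (fun i _ => sqr_ge0 (U i j)) H2 (i := i) isT.
by apply/eqP; rewrite -sqrf_eq0 H3.
Qed.

Lemma frob_gt0 m k (U : 'M[R]_(m, k)) : U != 0 -> 0 < frob U U.
Proof.
move=> HU; rewrite lt_neqAle frob_ge0 andbT eq_sym; apply/eqP => /frob_eq0 H.
by rewrite H eqxx in HU.
Qed.

Lemma frob_mulr m k l (Y : 'M[R]_(m, k)) (x : 'M[R]_(m, l)) (u : 'M[R]_(l, k)) :
  frob Y (x *m u) = frob (Y *m u^T) x.
Proof.
by rewrite /frob mulmxA mxtrace_mulC trmx_mul trmxK mulmxA.
Qed.

Lemma psd_frob m k (S : 'M[R]_m) (Z : 'M[R]_(m, k)) :
  (forall x : 'cV[R]_m, 0 <= (x^T *m (S *m x)) 0 0) -> 0 <= frob Z (S *m Z).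
Proof.
move=> H; rewrite /frob /mxtrace; apply: sumr_ge0 => j _.
have := H (col j Z); rewrite !mxE.
congr (_ <= _); apply: eq_bigr => i _; rewrite !mxE; congr (_ * _).
by apply: eq_bigr => l _; rewrite !mxE.
Qed.

End Helpers.

Theorem corollary5 (R : realType) (n p : nat) (A : 'M[R]_n) (b : 'cV[R]_n) (c : R) :
  (2 <= n)%N -> (2 <= p)%N -> A^T = A ->
  forall Y : 'M[R]_(n + 1, p),
    second_order_critical (Cmat A b c) Y -> globally_optimal (Cmat A b c) Y.
Proof.
move=> _ hp hA Y [[HY1 HY2] [Hg Hh]].
set C := Cmat A b c in Hg Hh *.
have HC : C^T = C by rewrite /C /Cmat tr_block_mx trmxK tr_scalar_mx hA.
set E : 'M[R]_(n + 1) := 2%:R *: C.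
have HE : E^T = E by rewrite /E linearZ /= HC.
have Heg : forall Z : 'M[R]_(n + 1, p), egrad C Z = E *m Z.
  by move=> Z; rewrite /egrad /E scalemxAl.
have Heh : forall Z : 'M[R]_(n + 1, p), ehess C Z = E *m Z by move=> Z; rewrite /ehess /E scalemxAl.
move/eqP: Hg; rewrite /rgrad /projT col_mx_eq0 => /andP [/eqP h1 /eqP h2].
set mu := frob (Yblk1 Y) (Yblk1 (egrad C Y)) in h1.
set nu := frob (Yblk2 Y) (Yblk2 (egrad C Y)) in h2.
move/subr0_eq: h1 => h1; move/subr0_eq: h2 => h2.
set Lam : 'M[R]_(n + 1) := block_mx (mu%:M) 0 0 (nu%:M).
have HL : forall k (Z : 'M[R]_(n + 1, k)), Lam *m Z = col_mx (mu *: usubmx Z) (nu *: dsubmx Z).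
  by move=> k Z; rewrite -{1}(vsubmxK Z) mul_block_col !mul0mx !mul_scalar_mx addr0 add0r.
have HLT : Lam^T = Lam by rewrite /Lam tr_block_mx !tr_scalar_mx !trmx0.
set S := E - Lam.
have HST : S^T = S by rewrite /S linearB /= HE HLT.
have HEY : E *m Y = Lam *m Y.
  by rewrite HL -Heg -{1}(vsubmxK (egrad C Y)) -[usubmx _]/(Yblk1 _) -[dsubmx _]/(Yblk2 _) h1 h2.
have HSY : S *m Y = 0 by rewrite /S mulmxBl HEY subrr.
have HLf : forall Z : 'M[R]_(n + 1, p), frob Z (Lam *m Z) = mu * frob (Yblk1 Z) (Yblk1 Z) + nu * frob (Yblk2 Z) (Yblk2 Z).
  by move=> Z; rewrite HL frob_split col_mxKu col_mxKd !frobZr.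
have Hso : forall V, tangent Y V -> 0 <= frob V (S *m V).
  move=> V [t1 t2]; have := Hh V (conj t1 t2).
  rewrite /rhess /projT -/mu -/nu Heh frobBr !frob_split !col_mxKu !col_mxKd !frobBr !frobZr.
  rewrite !(frobC _ _ _ (usubmx V) (Yblk1 Y)) !(frobC _ _ _ (dsubmx V) (Yblk2 Y)).
  rewrite -[usubmx V]/(Yblk1 V) -[dsubmx V]/(Yblk2 V) t1 t2 !mulr0 !subr0.
  rewrite /S mulmxBl => H.
  rewrite !linearB /= HL col_mxKu col_mxKd !frobBr !frobZr.
  by rewrite addrACA -opprD.
pose Y1 := usubmx Y; pose y2 := dsubmx Y.
pose M1 := Y1^T *m Y1; pose M2 := y2^T *m y2.
have hM1 : \tr M1 = 1 by exact: HY1.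
have hM2 : \tr M2 = 1 by exact: HY2.
have fY : forall k l (U : 'M[R]_(k, l)) (W : 'M[R]_l), frob U (U *m W) = \tr (U^T *m U *m W).
  by move=> k l U W; rewrite /frob mulmxA.
have HYS : Y^T *m S = 0 by rewrite -HST -trmx_mul HSY trmx0.
have Hpsd : forall x : 'cV[R]_(n + 1), 0 <= (x^T *m (S *m x)) 0 0.
  move=> x; set s := (x^T *m (S *m x)) 0 0.
  have key : forall (u : 'rV[R]_p) (W : 'M[R]_p), tangent Y (x *m u + Y *m W) ->
      0 <= s * frob u u.
    move=> u W Ht; have := Hso _ Ht.
    rewrite mulmxDr !mulmxA HSY mul0mx addr0 frobDl.
    have -> : frob (Y *m W) (S *m x *m u) = 0.
      by rewrite /frob trmx_mul -!mulmxA (mulmxA Y^T S) HYS !mul0mx mulmx0 linear0.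
    have Hx : x^T *m (S *m x *m u) = s *: u.
      by rewrite mulmxA {1}(mx11_scalar (x^T *m (S *m x))) mul_scalar_mx.
    by rewrite addr0 /frob trmx_mul -(mulmxA u^T x^T) Hx -scalemxAr mxtraceZ.
  have Htan : forall (u : 'rV[R]_p) (W : 'M[R]_p),
      frob Y1 (usubmx x *m u) + \tr (M1 *m W) = 0 ->
      frob y2 (dsubmx x *m u) + \tr (M2 *m W) = 0 -> tangent Y (x *m u + Y *m W).
    move=> u W e1 e2; split.
      by rewrite /Yblk1 linearD /= -!mul_usub_mx frobDr fY.
    by rewrite /Yblk2 linearD /= -!mul_dsub_mx frobDr fY.
  pose i0 : 'I_p := Ordinal (ltnW hp).
  pose i1 : 'I_p := Ordinal hp.
  have delta_neq0 : forall i : 'I_p, delta_mx 0 i != 0 :> 'rV[R]_p.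
    move=> i; apply/eqP => H; have := congr1 (fun M : 'rV[R]_p => M 0 i) H.
    by rewrite !mxE !eqxx /= => /eqP; rewrite oner_eq0.
  have [HD|HD] := eqVneq M1 M2.
  - have [u [Hu0 Hyu]] : exists u : 'rV[R]_p, u != 0 /\ y2 *m u^T = 0.
      have [ha|ha] := eqVneq (y2 0 i0) 0.
        exists (delta_mx 0 i0); split; first exact: delta_neq0.
        rewrite trmx_delta -colE; apply/matrixP => i j.
        by move: ha; rewrite !ord1 !mxE.
      exists (y2 0 i1 *: delta_mx 0 i0 - y2 0 i0 *: delta_mx 0 i1); split.
        apply/eqP => H; have := congr1 (fun M : 'rV[R]_p => M 0 i1) H.
        rewrite !mxE !eqxx /= mulr0 mulr1 sub0r => /eqP; rewrite oppr_eq0.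
        by move: ha; rewrite mxE => /negbTE ->.
      have -> : (y2 0 i1 *: delta_mx 0 i0 - y2 0 i0 *: delta_mx 0 i1)^T
          = y2 0 i1 *: delta_mx i0 0 - y2 0 i0 *: delta_mx i1 0 :> 'cV[R]_p.
        by apply/matrixP => i j; rewrite !mxE !(andbC (j == 0)).
      rewrite mulmxBr -!scalemxAr -!colE.
      apply/matrixP => i j; rewrite !ord1 !mxE mulrC subrr.
      by [].
    have HYu : Y1 *m u^T = 0.
      apply: frob_eq0.
      have -> : frob (Y1 *m u^T) (Y1 *m u^T) = frob (y2 *m u^T) (y2 *m u^T).
        by rewrite /frob !trmx_mul !trmxK -!mulmxA (mulmxA Y1^T) (mulmxA y2^T) -/M1 -/M2 HD.
      by rewrite Hyu frob0r.
    have Hpos : 0 < frob u u by exact: frob_gt0.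
    rewrite -(pmulr_lge0 _ Hpos); apply: (key u 0); apply: Htan.
    - by rewrite mulmx0 linear0 addr0 frob_mulr HYu frob0l.
    - by rewrite mulmx0 linear0 addr0 frob_mulr Hyu frob0l.
  - pose u : 'rV[R]_p := delta_mx 0 i0.
    pose D := M1 - M2.
    have hD : D != 0 by rewrite /D subr_eq0.
    pose d := frob D D.
    have hd : 0 < d by exact: frob_gt0.
    pose t1 := frob Y1 (usubmx x *m u); pose t2 := frob y2 (dsubmx x *m u).
    pose c1 := \tr (M1 *m D^T); pose c2 := \tr (M2 *m D^T).
    have Hc : c1 - c2 = d.
      by rewrite /c1 /c2 -linearB /= -mulmxBl -/D mxtrace_mulC.
    pose be := (t2 - t1) / d.
    have Hbe : be * d = t2 - t1 by rewrite /be divfK // gt_eqF.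
    pose al := - t1 - be * c1.
    pose W : 'M[R]_p := al%:M + be *: D^T.
    have trW : forall M : 'M[R]_p, \tr (M *m W) = al * \tr M + be * \tr (M *m D^T).
      by move=> M; rewrite mulmxDr mul_mx_scalar -scalemxAr mxtraceD !mxtraceZ.
    have Hpos : 0 < frob u u := @frob_gt0 R _ _ u (delta_neq0 i0).
    rewrite -(pmulr_lge0 _ Hpos); apply: (key u W); apply: Htan.
    - rewrite trW hM1 -/c1 -/t1 /al; ring.
    - rewrite trW hM2 -/c2 -/t2 /al.
      have -> : t2 + ((- t1 - be * c1) * 1 + be * c2) = (t2 - t1) - be * (c1 - c2) by ring.
      by rewrite Hc Hbe subrr.
split; first by split.
move=> Z [HZ1 HZ2].
have two_gt0 : (0 : R) < 2%:R by rewrite ltr0n.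
rewrite -(ler_pM2l two_gt0) /cost.
have e2 : forall Z' : 'M[R]_(n + 1, p), 2%:R * frob (C *m Z') Z' = frob Z' (E *m Z').
  by move=> Z'; rewrite -frobZl scalemxAl frobC.
rewrite !e2 HEY HLf HY1 HY2.
have -> : E = S + Lam by rewrite /S subrK.
rewrite mulmxDl frobDr HLf HZ1 HZ2 lerDr.
exact: psd_frob.
Qed.
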